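(* Let $n,d,k$ be positive integers with $n\ge dk$. Then the value of the single-treasure-per-door search game with parameters $(n,d,k)$ is $$v_1(n,d,k)=\frac{k^d}{\binom nd}.$$
   Context: The single-treasure-per-door search game with parameters $(n,d,k)$ is the following two-player zero-sum game. First the hider places $d$ treasures behind $n$ doors, at most one treasure behind each door. Then the searcher plays rounds: in each round she selects (guesses) a set of at most $k$ doors. If none of the selected doors hides a treasure not yet found, she loses immediately. Otherwise the hider reveals one not-yet-found treasure behind one of the selected doors (the hider chooses which one if there are several). The searcher wins if she finds all $d$ treasures with a total of $d$ guesses (rounds). The searcher's choices may be randomized and may depend on all previous answers; the hider may randomize his hiding and revealing choices. The value $v_1(n,d,k)$ is the probability that the searcher wins when both players play optimally. *)

(* Defs.v *)
From mathcomp Require Import all_boot all_order all_algebra.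
Set Implicit Arguments. Unset Strict Implicit. Unset Printing Implicit Defensive.
Import Order.TTheory GRing.Theory Num.Theory.
Local Open Scope ring_scope.

(* A pure searcher strategy: the guess (a set of doors) as a function of the
   sequence of treasures revealed so far (the only information she receives;
   her own past guesses are determined by it). *)
Definition searcher_strategy (n : nat) := seq 'I_n -> {set 'I_n}.

Definition searcher_legal (n k : nat) (s : searcher_strategy n) : Prop :=
  forall h, (#|s h| <= k)%N.

(* A pure hider strategy: a placement S of the treasures together with a
   revealing rule, which may depend on the whole history (past guesses and
   revealed doors) and on the current guess.  If the rule proposes a door that
   is not an admissible answer (a not-yet-found treasure among the selected
   doors), some admissible door is revealed instead; thus the set of induced
   behaviours is exactly the set of legal revealing rules. *)
Definition hider_strategy (n : nat) :=
  ({set 'I_n} * (seq ({set 'I_n} * 'I_n) -> {set 'I_n} -> 'I_n))%type.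

Fixpoint run (n : nat) (s : searcher_strategy n) (S : {set 'I_n})
    (rho : seq ({set 'I_n} * 'I_n) -> {set 'I_n} -> 'I_n)
    (m : nat) (hist : seq ({set 'I_n} * 'I_n)) : bool :=
  match m with
  | 0 => true
  | m'.+1 =>
      let found := map snd hist in
      let G := s found in
      let avail := G :&: (S :\: [set x in found]) in
      if avail == set0 then false
      else
        let r := if rho hist G \in avail then rho hist G
                 else odflt (rho hist G) [pick x in avail] in
        run s S rho m' (rcons hist (G, r))
  end.

(* The searcher wins iff she finds all d treasures with d guesses, i.e. no
   round among the d rounds fails (each successful round reveals a new
   treasure). *)
Definition searcher_wins (n d : nat) (s : searcher_strategy n)
    (h : hider_strategy n) : bool :=
  run s h.1 h.2 d [::].

(* A mixed strategy = finite probability distribution over pure strategies. *)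
Definition is_distr (R : numDomainType) (m : nat) (p : 'I_m -> R) : Prop :=
  (forall i, 0 <= p i) /\ \sum_(i < m) p i = 1.

Definition is_value (R : numDomainType) (n d k : nat) (v : R) : Prop :=
  (exists (m : nat) (p : 'I_m -> R) (sig : 'I_m -> searcher_strategy n),
      is_distr p /\ (forall i, searcher_legal k (sig i)) /\
      forall h : hider_strategy n, #|h.1| = d ->
        v <= \sum_(i < m) p i * (searcher_wins d (sig i) h)%:R)
  /\
  (exists (m : nat) (q : 'I_m -> R) (hs : 'I_m -> hider_strategy n),
      is_distr q /\ (forall j, #|(hs j).1| = d) /\
      forall s : searcher_strategy n, searcher_legal k s ->
        \sum_(j < m) q j * (searcher_wins d s (hs j))%:R <= v).

Arguments is_value : clear implicits.

(* Main.v *)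
Require Import Defs.
From mathcomp Require Import all_boot all_order all_algebra fingroup perm.
From mathcomp Require Import zify ring lra.
Import Order.TTheory GRing.Theory Num.Theory.
Set Implicit Arguments. Unset Strict Implicit.

Section RunFacts.
Variables (n : nat) (s : searcher_strategy n)
  (rho : seq ({set 'I_n} * 'I_n) -> {set 'I_n} -> 'I_n).

Definition availS (S : {set 'I_n}) (hist : seq ({set 'I_n} * 'I_n)) :=
  s (map snd hist) :&: (S :\: [set x in map snd hist]).

Definition pickr (S : {set 'I_n}) hist :=
  if rho hist (s (map snd hist)) \in availS S hist then rho hist (s (map snd hist))
  else odflt (rho hist (s (map snd hist))) [pick x in availS S hist].

Lemma pickr_in S hist : availS S hist != set0 -> pickr S hist \in availS S hist.
Proof.
rewrite /pickr; case: ifP => // _.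
case: pickP => [x //|H] /set0Pn [y Hy].
by have := H y; rewrite Hy.
Qed.

Lemma runS S m hist : run s S rho m.+1 hist =
  (availS S hist != set0) && run s S rho m (rcons hist (s (map snd hist), pickr S hist)).
Proof. by rewrite /= /pickr /availS; case: eqP. Qed.

Lemma count_win k : searcher_legal k s -> forall m hist,
  #|[set S : {set 'I_n} | ([set x in map snd hist] \subset S) &&
     (#|S :\: [set x in map snd hist]| == m) && run s S rho m hist]| <= k ^ m.
Proof.
move=> leg; elim => [|m IH] hist.
  rewrite expn0.
  apply: leq_trans (_ : #|[set [set x in map snd hist]]| <= 1); last by rewrite cards1.
  apply: subset_leq_card; apply/subsetP => S; rewrite !inE => /andP [/andP [sub]].
  rewrite cards_eq0 setD_eq0 => sub2 _.
  by rewrite eqEsubset sub2 sub.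
set G := s (map snd hist).
set F := [set x in map snd hist].
rewrite -sum1_card.
rewrite (partition_big (fun S => pickr S hist) (fun r => r \in G)); last first.
  move=> S; rewrite inE. move=> /andP [_]. rewrite (runS S m hist) => /andP [/pickr_in].
  by rewrite /availS inE => /andP [].
apply: leq_trans (_ : \sum_(r in G) k ^ m <= _).
  apply: leq_sum => r rG.
  apply: leq_trans (IH (rcons hist (G, r))).
  rewrite sum1_card; apply: subset_leq_card; apply/subsetP => S.
  move=> /andP []; rewrite inE runS => /andP [/andP [sub cd] /andP [av rn]] /eqP pr.
  have rin := pickr_in av. rewrite pr /availS inE in rin.
  move: rin; rewrite -/G -/F => /andP [rG' rSF].
  move: rn; rewrite pr -/G inE => ->.
  rewrite map_rcons.
  have -> : [set x in rcons (map snd hist) r] = r |: F.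
    by apply/setP => x; rewrite !inE mem_rcons inE.
  rewrite subUset sub1set.
  move: (rSF); rewrite inE => /andP [_ rS]. rewrite rS sub /=.
  have -> : S :\: (r |: F) = (S :\: F) :\ r by rewrite setDDl setUC.
  have := cardsD1 r (S :\: F). rewrite !inE rS.
  move: (rSF). rewrite inE => /andP [rF _]. 
  rewrite inE in rF; rewrite rF /= add1n andbT (eqP cd) => -[->] //.
rewrite big_const iter_addn_0 expnS [k * _]mulnC leq_mul2l.
by rewrite leg orbT.
Qed.
End RunFacts.

Lemma perm_trans_sets n m : forall (S S' : {set 'I_n}), #|S'| = #|S| ->
  #|S' :\: S| = m -> exists s : {perm 'I_n}, s @: S' = S.
Proof.
elim: m => [|m IH] S S' Hc Hm.
  exists 1%g.
  have sub : S' \subset S by rewrite -setD_eq0 -cards_eq0 Hm.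
  have -> : S' = S by apply/eqP; rewrite eqEcard sub Hc leqnn.
  rewrite -[in RHS](imset_id S); apply: eq_imset => x; exact: perm1.
have /card_gt0P [a Ha] : 0 < #|S' :\: S| by rewrite Hm.
have HSS : #|S :\: S'| = #|S' :\: S|.
  have e1 := cardsID S S'. have e2 := cardsID S' S.
  rewrite setIC in e2. lia.
have /card_gt0P [b Hb] : 0 < #|S :\: S'| by rewrite HSS Hm.
move: Ha Hb; rewrite !inE => /andP [aS aS'] /andP [bS' bS].
set t := tperm a b.
have memt x : (x \in t @: S') = (t x \in S').
  by rewrite -{1}(tpermK a b x) mem_imset //; exact: perm_inj.
have Hc' : #|t @: S'| = #|S| by rewrite card_imset //; exact: perm_inj.
have Hd : (t @: S') :\: S = (S' :\: S) :\ a.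
  apply/setP => x; rewrite !inE memt.
  case: (tpermP a b x) => [->|->|/eqP xa /eqP xb].
  - by rewrite eqxx (negbTE bS') andbF.
  - by rewrite bS /= andbF.
  - by rewrite xa.
have Hm' : #|(t @: S') :\: S| = m.
  rewrite Hd. have := cardsD1 a (S' :\: S). rewrite !inE aS' aS Hm /=. lia.
have [s Hs] := IH S _ Hc' Hm'.
exists (t * s)%g. rewrite -Hs -imset_comp. apply: eq_imset => x /=. by rewrite permM.
Qed.

Section Searcher.
Variables (n d k : nat).
Hypothesis k0 : (0 < k)%N.

Definition blk (p : {perm 'I_n}) (x : 'I_n) : nat := ((p^-1)%g x) %/ k.
Definition strat (p : {perm 'I_n}) : searcher_strategy n :=
  fun h => [set x | blk p x == size h].
Definition cond (p : {perm 'I_n}) (S : {set 'I_n}) :=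
  [forall j : 'I_d, [exists x in S, blk p x == j]].

Lemma strat_legal p : searcher_legal k (strat p).
Proof.
move=> h; rewrite /strat.
have inj : {in [set x | blk p x == size h] &,
   injective (fun x => Ordinal (ltn_pmod ((p^-1)%g x) k0))}.
  move=> x y; rewrite !inE /blk => /eqP bx /eqP b2 e.
  have /= m := congr1 val e.
  apply: (@perm_inj _ (p^-1)%g); apply: val_inj.
  by rewrite /= (divn_eq ((p^-1)%g x) k) (divn_eq ((p^-1)%g y) k) bx b2 m.
by have := leq_card_in _ _ inj; rewrite card_ord.
Qed.

Lemma strat_run p S rho : cond p S -> forall m hist, (size hist + m <= d)%N ->
  (forall x, x \in map snd hist -> (blk p x < size hist)%N) ->
  run (strat p) S rho m hist.
Proof.
move=> c; elim=> [//|m IH] hist hs hb.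
have av : availS (strat p) S hist != set0.
  have jd : (size hist < d)%N by lia.
  move/forallP: c => /(_ (Ordinal jd)) /existsP [x /andP [xS /eqP bx]].
  apply/set0Pn; exists x; rewrite /availS /strat !inE size_map bx eqxx xS /= ?andbT.
  by apply/negP => /(hb x); rewrite bx /= ltnn.
rewrite runS av /=; apply: IH; first by rewrite size_rcons; lia.
move=> x; rewrite map_rcons mem_rcons inE size_rcons => /orP [/eqP ->|/hb]; last by lia.
have := pickr_in rho av; rewrite /availS /strat !inE size_map /= => /and3P [/eqP -> _ _].
by [].
Qed.

Lemma blk_mul p q x : blk (p * q)%g (q x) = blk p x.
Proof. by rewrite /blk invMg permM permK. Qed.

Lemma cond_mul p q (S : {set 'I_n}) : cond (p * q)%g (q @: S) = cond p S.
Proof.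
apply/forallP/forallP => H j; move: (H j) => /existsP [x /andP [xS /eqP bx]]; apply/existsP.
  case/imsetP: xS => y yS exy. exists y; rewrite yS -bx exy blk_mul. by rewrite eqxx.
exists (q x); rewrite mem_imset; [by rewrite xS blk_mul bx eqxx | exact: perm_inj].
Qed.

Definition W S := #|[set p : {perm 'I_n} | cond p S]|.

Lemma W_mono (S : {set 'I_n}) (q : {perm 'I_n}) : (W S <= W (q @: S))%N.
Proof.
rewrite /W -(card_imset _ (mulIg q)); apply: subset_leq_card; apply/subsetP => _ /imsetP [p pin ->].
by rewrite inE cond_mul; rewrite inE in pin.
Qed.

Lemma W_eq (S S' : {set 'I_n}) : #|S'| = #|S| -> (W S' <= W S)%N.
Proof.
move=> e; have [q <-] := perm_trans_sets e (erefl _).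
exact: W_mono.
Qed.


Lemma strat_wins p S rho : cond p S -> searcher_wins d (strat p) (S, rho).
Proof. move=> c; apply: strat_run => //. Qed.

Hypothesis dk : (d * k <= n)%N.
Hypothesis d0 : (0 < d)%N.

Lemma n0 : (0 < n)%N.
Proof. apply: leq_trans dk; by rewrite muln_gt0 d0 k0. Qed.

Definition x0 : 'I_n := Ordinal n0.
Definition pos (f : {ffun 'I_d -> 'I_k}) (j : 'I_d) : 'I_n := insubd x0 (j * k + f j).

Lemma pos_val f j : val (pos f j) = (j * k + f j)%N.
Proof.
rewrite val_insubd.
have -> : (j * k + f j < n)%N => //.
apply: (@leq_trans (j.+1 * k)); first by rewrite mulSn [k + _]addnC ltn_add2l ltn_ord.
apply: leq_trans dk; by rewrite leq_mul2r ltn_ord orbT.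
Qed.

Lemma blk_pos p f j : blk p (p (pos f j)) = j.
Proof. by rewrite /blk permK pos_val divnMDl // divn_small // addn0. Qed.

Definition Tset (p : {perm 'I_n}) f := [set p (pos f j) | j : 'I_d].

Lemma Tset_card p f : #|Tset p f| = d.
Proof.
rewrite card_imset ?card_ord // => i j /(congr1 (blk p)); rewrite !blk_pos.
exact: val_inj.
Qed.

Lemma Tset_cond p f : cond p (Tset p f).
Proof.
apply/forallP => j; apply/existsP; exists (p (pos f j)).
by rewrite imset_f ?blk_pos ?eqxx.
Qed.

Lemma Tset_inj p : injective (Tset p).
Proof.
move=> f g e; apply/ffunP => j.
have : p (pos f j) \in Tset p g by rewrite -e imset_f.
case/imsetP => j' _ ej.
have jj : j = j'.
  by apply: val_inj; rewrite /= -(blk_pos p f j) ej blk_pos.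
subst j'. move/perm_inj: ej => /(congr1 val); rewrite !pos_val => /addnI.
exact: val_inj.
Qed.

Lemma count_lower p : (k ^ d <= #|[set S : {set 'I_n} | (#|S| == d) && cond p S]|)%N.
Proof.
have -> : (k ^ d = #|[set Tset p f | f : {ffun 'I_d -> 'I_k}]|)%N.
  by rewrite card_imset ?card_ffun ?card_ord //; exact: Tset_inj.
apply: subset_leq_card; apply/subsetP => _ /imsetP [f _ ->].
by rewrite inE Tset_card eqxx Tset_cond.
Qed.

Lemma sum_W : (#|{perm 'I_n}| * k ^ d <=
   \sum_(S in [set S : {set 'I_n} | #|S| == d]) W S)%N.
Proof.
have -> : \sum_(S in [set S : {set 'I_n} | #|S| == d]) W S =
   \sum_(S in [set S : {set 'I_n} | #|S| == d]) \sum_(p | cond p S) 1.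
  apply: eq_bigr => S _; rewrite /W -sum1_card; apply: eq_bigl => p; by rewrite inE.
rewrite (exchange_big_dep predT) //=.
apply: (@leq_trans (\sum_(p : {perm 'I_n}) k ^ d)).
  by rewrite sum_nat_const.
apply: leq_sum => p _.
apply: leq_trans (count_lower p) _; rewrite -sum1_card; apply: eq_leq; apply: eq_bigl => S.
by rewrite !inE.
Qed.

Lemma W_bound (S : {set 'I_n}) : #|S| = d -> (#|{perm 'I_n}| * k ^ d <= 'C(n, d) * W S)%N.
Proof.
move=> cS; apply: leq_trans sum_W _.
rewrite -[n in 'C(n, _)]card_ord -card_draws -sum_nat_const.
apply: leq_sum => S'; rewrite inE => /eqP e; apply: W_eq; by rewrite e.
Qed.

End Searcher.

Local Open Scope ring_scope.
Theorem theorem1 (R : realFieldType) (n d k : nat) :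
  (0 < n)%N -> (0 < d)%N -> (0 < k)%N -> (d * k <= n)%N ->
  is_value R n d k ((k ^ d)%:R / ('C(n, d))%:R).
Proof.
move=> hn hd hk hdk.
have Cpos : (0 < 'C(n, d))%N.
  rewrite bin_gt0; apply: leq_trans hdk; by rewrite leq_pmulr.
have CposR : 0 < ('C(n, d))%:R :> R by rewrite ltr0n.
split.
- set N := #|{perm 'I_n}|.
  have Npos : (0 < N)%N by apply/card_gt0P; exists 1%g.
  have NposR : 0 < N%:R :> R by rewrite ltr0n.
  exists N, (fun _ => (N%:R)^-1), (fun i => strat k (enum_val i)).
  split; [split|split].
  + by move=> i; rewrite invr_ge0 ler0n.
  + by rewrite sumr_const card_ord -[_ *+ N]mulr_natr mulVf // gt_eqF.
  + move=> i; exact: strat_legal.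
  case=> S rho /= cS.
  rewrite -(big_enum_val (A := {perm 'I_n})
     (fun p => (N%:R)^-1 * ((searcher_wins d (strat k p) (S, rho))%:R : R))) /=.
  apply: (@le_trans _ _ (\sum_(p in {perm 'I_n}) (N%:R)^-1 * ((cond d k p S)%:R : R))); last first.
    apply: ler_sum => p _; apply: ler_wpM2l; first by rewrite invr_ge0 ler0n.
    rewrite ler_nat; case c: (cond d k p S) => //.
    by rewrite (strat_wins hk rho c).
  rewrite -mulr_sumr.
  have eW : \sum_(p in {perm 'I_n}) ((cond d k p S)%:R : R) = (W d k S)%:R.
    rewrite /W -sum1_card natr_sum [RHS]big_mkcond [LHS]big_mkcond /=.
    apply: eq_bigr => p _; rewrite !inE; by case: (cond d k p S).
  rewrite eW.
  have hb := W_bound hk hdk hd cS.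
  have hbR : N%:R * (k ^ d)%:R <= ('C(n, d))%:R * (W d k S)%:R :> R.
    by rewrite -!natrM ler_nat.
  have E : (k ^ d)%:R / ('C(n, d))%:R - (N%:R)^-1 * (W d k S)%:R
         = (N%:R * (k ^ d)%:R - ('C(n, d))%:R * (W d k S)%:R) / (N%:R * ('C(n, d))%:R) :> R.
    field. by rewrite !gt_eqF.
  rewrite -subr_le0 E; apply: mulr_le0_ge0; first by rewrite subr_le0.
  by rewrite invr_ge0 mulr_ge0 // ler0n.
- set D := [set S : {set 'I_n} | #|S| == d].
  have cD : #|D| = 'C(n, d) by rewrite card_draws card_ord.
  pose rho0 := fun (_ : seq ({set 'I_n} * 'I_n)) (_ : {set 'I_n}) => Ordinal hn.
  exists #|D|, (fun _ => (#|D|%:R)^-1), (fun j => (enum_val j, rho0)).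
  split; [split|split].
  + by move=> i; rewrite invr_ge0 ler0n.
  + by rewrite sumr_const card_ord -[_ *+ #|D|]mulr_natr mulVf // cD gt_eqF.
  + by move=> j /=; have := enum_valP j; rewrite inE => /eqP.
  move=> s leg.
  rewrite -(big_enum_val (A := [pred S in D])
     (fun S => (#|D|%:R)^-1 * ((searcher_wins d s (S, rho0))%:R : R))) /= -mulr_sumr.
  have hc := count_win rho0 leg d [::].
  have E0 : [set x in [::] : seq 'I_n] = set0 by apply/setP => x; rewrite !inE.
  have hs : \sum_(S in D) ((searcher_wins d s (S, rho0))%:R : R) <= (k ^ d)%:R.
    apply: le_trans (_ : (#|[set S : {set 'I_n} | ([set x in map snd ([::] : seq ({set 'I_n} * 'I_n))] \subset S) &&
       (#|S :\: [set x in map snd ([::] : seq ({set 'I_n} * 'I_n))]| == d) && run s S rho0 d [::]]|)%:R <= _);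
      last by rewrite ler_nat.
    rewrite -sum1_card natr_sum [X in _ <= X]big_mkcond [X in X <= _]big_mkcond /=.
    apply: ler_sum => S _.
    case SD: (S \in D); case w: (searcher_wins d s (S, rho0)); case SX: (S \in _) => //.
    move: SX; rewrite inE E0 sub0set setD0 /=.
    move: SD; rewrite inE => ->.
    by move: w; rewrite /searcher_wins /= => ->.
  rewrite cD mulrC; apply: ler_wpM2r; first by rewrite invr_ge0 ler0n.
  exact: hs.
Qed.
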